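(* For the Lr $(\mathbf a,\tau)$ interval exchange transformation $T$ and its dual $\tilde T$, one has $D\cap T^k(D)=\emptyset$ for all $k\in\mathbb N$ if and only if $D\cap\tilde T^k(D)=\emptyset$ for all $k\in\mathbb N$.
   Context: Fix $n\ge 2$, $[n]=\{1,\dots,n\}$, a vector $\mathbf a=(a_1,\dots,a_n)$ with all $a_i>0$ and $\sum_i a_i=1$, and a permutation $\tau$ of $[n]$. Put $b_0=0$, $b_i=\sum_{j=1}^i a_j$, $J_i=[b_{i-1},b_i)$, $\tilde J_i=(b_{i-1},b_i]$, $D=\{b_1,\dots,b_{n-1}\}$, $b^\tau_0=0$, $b^\tau_i=\sum_{j=1}^i a_{\tau^{-1}(j)}$. $T:[0,1)\to[0,1)$ and $\tilde T:(0,1]\to(0,1]$ are defined by $x\mapsto x-b_{i-1}+b^\tau_{\tau(i)-1}$ for $x\in J_i$ (resp. $x\in\tilde J_i$). *)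

(* Defs.v *)
From HB Require Import structures.
From mathcomp Require Import all_boot all_order all_algebra all_fingroup.
From mathcomp Require Import reals.
Set Implicit Arguments. Unset Strict Implicit. Unset Printing Implicit Defensive.
Import Order.TTheory GRing.Theory Num.Theory.
Local Open Scope ring_scope.

(* Indices are 0-based: i : 'I_n corresponds to the paper's i+1. *)
Section IET.
Variables (R : realType) (n : nat) (a : 'I_n -> R) (tau : 'S_n).

Definition bpt (k : nat) : R := \sum_(j < n | (j < k)%N) a j.

Definition btau (k : nat) : R := \sum_(j < n | (j < k)%N) a ((tau^-1)%g j).

Definition inJ (i : 'I_n) (x : R) : bool := (bpt i <= x) && (x < bpt i.+1).
Definition inJt (i : 'I_n) (x : R) : bool := (bpt i < x) && (x <= bpt i.+1).

(* T and tilde T; outside their domains [0,1) resp. (0,1] they are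
   extended by the identity (irrelevant: D lies in (0,1) and both maps
   preserve their domain). *)
Definition iet (x : R) : R :=
  if [pick i | inJ i x] is Some i then x - bpt i + btau (tau i) else x.
Definition iet_dual (x : R) : R :=
  if [pick i | inJt i x] is Some i then x - bpt i + btau (tau i) else x.

Definition Dset (x : R) : Prop := exists k : nat, (1 <= k <= n.-1)%N /\ x = bpt k.

End IET.

(* Main.v *)
Require Import Defs.
From HB Require Import structures.
From mathcomp Require Import all_boot all_order all_algebra all_fingroup.
From mathcomp Require Import reals.
From mathcomp Require Import zify.
From Stdlib Require Import Classical.
Import Order.TTheory GRing.Theory Num.Theory.
Set Implicit Arguments. Unset Strict Implicit.
Local Open Scope ring_scope.

Lemma iterG (T : Type) (f : T -> T) (H : T -> Prop) (y : T) :
  forall m w, H w -> iter m.+1 f w = y ->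
  exists u r, H u /\ (forall i, (i < r)%N -> ~ H (iter i f (f u)))
              /\ iter r f (f u) = y.
Proof.
elim/ltn_ind => m IH w Hw E. rewrite iterSr in E.
destruct (classic (exists i, (i < m)%N /\ H (iter i f (f w)))) as [[i [lt Hi]]|Hno].
- apply: (IH (m - i.+1)%N _ (iter i f (f w)) Hi); first by lia.
  rewrite -iterD. have -> : ((m - i.+1).+1 + i = m)%N by lia. by [].
- exists w, m; split; [done| split; last done].
  move=> i hi Hi; apply: Hno; exists i; auto.
Qed.

Lemma iter_agree (T : Type) (f g : T -> T) (H : T -> Prop) :
  (forall x, ~ H x -> f x = g x) -> forall r v,
  (forall i, (i < r)%N -> ~ H (iter i f v)) -> iter r g v = iter r f v.
Proof.
move=> Hfg; elim => [//| r IH] v Hc /=.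
rewrite IH; last by move=> i hi; apply: Hc; lia.
symmetry; apply: Hfg; apply: Hc; lia.
Qed.

Lemma iter_r0 (T : Type) (f : T -> T) (H : T -> Prop) r v :
  H v -> (forall i, (i < r)%N -> ~ H (iter i f v)) -> r = 0%N.
Proof. case: r => [//|r] Hv Hc. by case: (Hc 0%N). Qed.

Section W.
Variables (R : realType) (n : nat) (w : 'I_n -> R).

Lemma S0 : bpt w 0 = 0.
Proof. by rewrite /bpt big_pred0 // => j; rewrite ltn0. Qed.

Lemma Sstep (j : 'I_n) : bpt w j.+1 = bpt w j + w j.
Proof.
rewrite /bpt (bigD1 j) //= addrC; congr (_ + _); apply: eq_bigl => k.
by rewrite ltnS [(k < j)%N]ltn_neqAle andbC.
Qed.

Lemma Sle (hw : forall i, 0 <= w i) k1 k2 : (k1 <= k2)%N -> bpt w k1 <= bpt w k2.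
Proof.
move=> hk; rewrite /bpt !(big_mkcond (fun j : 'I_n => (j < _)%N)).
apply: ler_sum => j _; case: ifP => h1; case: ifP => h2 //.
by move: h2; rewrite (leq_trans h1 hk).
Qed.

Lemma Sn : bpt w n = \sum_i w i.
Proof. by apply: eq_bigl => j; rewrite ltn_ord. Qed.

End W.

Section Main.
Variables (R : realType) (n : nat) (a : 'I_n -> R) (tau : 'S_n).
Hypothesis ha : forall i, 0 < a i.
Hypothesis hs : \sum_(i < n) a i = 1.

Local Notation b := (bpt a).
Local Notation bt := (btau a tau).
Local Notation f := (iet a tau).
Local Notation g := (iet_dual a tau).

Lemma ha0 i : 0 <= a i. Proof. exact: ltW. Qed.

Lemma b_lt i j : (i < j)%N -> (j <= n)%N -> b i < b j.
Proof.
move=> hij hj. have hi : (i < n)%N by lia.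
have := Sle ha0 hij; rewrite (Sstep a (Ordinal hi)) /= => h.
by apply: lt_le_trans h; rewrite ltrDl.
Qed.

Lemma b_le_iff i j : (i <= n)%N -> (j <= n)%N -> (b i <= b j) = (i <= j)%N.
Proof.
move=> hi hj; case: (leqP i j) => h.
  by have := Sle ha0 h; move=> ->.
by apply: negbTE; rewrite -ltNge b_lt.
Qed.

Lemma b_lt_iff i j : (i <= n)%N -> (j <= n)%N -> (b i < b j) = (i < j)%N.
Proof. by move=> hi hj; rewrite ltNge b_le_iff // ltnNge. Qed.

Lemma b_inj i j : (i <= n)%N -> (j <= n)%N -> b i = b j -> i = j.
Proof.
move=> hi hj e; apply/eqP; by rewrite eqn_leq -(b_le_iff hi hj) -(b_le_iff hj hi) e lexx.
Qed.

Lemma bt_step (i : 'I_n) : bt (tau i).+1 = bt (tau i) + a i.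
Proof.
have := Sstep (fun j => a ((tau^-1)%g j)) (tau i); rewrite /= permK; exact.
Qed.

Lemma btn : bt n = b n.
Proof.
have -> : bt n = \sum_j a ((tau^-1)%g j) by apply: eq_bigl => j; rewrite ltn_ord.
by rewrite (Sn a) [RHS](reindex_inj (@perm_inj _ (tau^-1)%g)).
Qed.

Lemma bt0 : bt 0 = b 0.
Proof. by rewrite S0 /btau big_pred0 // => j; rewrite ltn0. Qed.

Lemma f_b (i : 'I_n) : f (b i) = bt (tau i).
Proof.
rewrite /iet; case: pickP => [j hj | hn].
- have -> : j = i.
    have := ltn_ord i; have := ltn_ord j => hj' hi'.
    apply: ord_inj; move: hj; rewrite /inJ b_le_iff ?b_lt_iff; lia.
  by rewrite subrr add0r.
- have := ltn_ord i => hi'.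
  have := hn i; rewrite /inJ lexx /= b_lt_iff; lia.
Qed.

Lemma g_b (i : 'I_n) : g (b i.+1) = bt (tau i).+1.
Proof.
rewrite /iet_dual; case: pickP => [j hj | hn].
- have -> : j = i.
    have := ltn_ord i; have := ltn_ord j => hj' hi'.
    apply: ord_inj; move: hj; rewrite /inJt b_le_iff ?b_lt_iff; lia.
  rewrite (Sstep a i) bt_step.
  by rewrite [b i + a i]addrC addrK addrC.
- have := ltn_ord i => hi'.
  have := hn i; rewrite /inJt lexx andbT /= b_lt_iff; lia.
Qed.

Lemma f_n : f (b n) = b n.
Proof.
rewrite /iet; case: pickP => [j hj | //].
have := ltn_ord j => hj'.
move: hj; rewrite /inJ b_le_iff ?b_lt_iff; lia.
Qed.

Lemma g_0 : g (b 0) = b 0.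
Proof.
rewrite /iet_dual; case: pickP => [j hj | //].
have := ltn_ord j => hj'.
move: hj; rewrite /inJt b_le_iff ?b_lt_iff; lia.
Qed.

Definition Hs (x : R) : Prop := exists k, (k <= n)%N /\ x = b k.

Lemma agree x : ~ Hs x -> f x = g x.
Proof.
move=> hx; rewrite /iet /iet_dual (@eq_pick _ _ (fun i => inJt a i x)) //.
move=> j /=; rewrite /inJ /inJt.
have hj := ltn_ord j.
have e1 : (b j == x) = false.
  apply/negbTE/eqP => e; apply: hx; exists j; split; [lia| by rewrite e].
have e2 : (x == b j.+1) = false.
  apply/negbTE/eqP => e; apply: hx; exists j.+1; split; [lia| by rewrite e].
by rewrite [b j <= x]le_eqVlt [x <= b j.+1]le_eqVlt e1 e2.
Qed.

Lemma D_H x : Dset a x -> Hs x.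
Proof. case=> k [hk ->]; exists k; split=> //; lia. Qed.

Lemma D_not0 y : Dset a y -> y <> b 0.
Proof.
case=> k [hk ->] e; have := b_inj _ _ e; lia.
Qed.

Lemma D_notn y : Dset a y -> y <> b n.
Proof.
case=> k [hk ->] e; have := b_inj _ _ e; lia.
Qed.

Lemma pre_g q : (0 < q)%N -> (q < n)%N ->
  exists x s, Dset a x /\ (0 < s)%N /\ iter s g x = bt q.
Proof.
move=> hq1 hq.
have hq' : (q.-1 < n)%N by lia.
set i := (tau^-1 (Ordinal hq'))%g.
have ti : tau i = Ordinal hq' by rewrite /i permKV.
have gi : g (b i.+1) = bt q by rewrite g_b ti /=; congr bt; lia.
case: (ltnP i.+1 n) => hin.
- exists (b i.+1), 1%N; split; last by [].
  exists i.+1; split=> //; lia.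
- have hn1 : (n.-1 < n)%N by lia.
  set i' := (tau^-1 (Ordinal hn1))%g.
  have ti' : tau i' = Ordinal hn1 by rewrite /i' permKV.
  have ne : i' != i.
    apply/eqP => e; move: ti; rewrite -e ti' => /(congr1 val) /=; lia.
  have hi' : (i'.+1 < n)%N.
    have : (i' : nat) <> i by move=> e; move/eqP: ne; apply; apply: val_inj.
    have := ltn_ord i'; have := ltn_ord i; lia.
  exists (b i'.+1), 2%N; split; first by exists i'.+1; split=> //; lia.
  split=> //=.
  rewrite g_b ti' /=.
  have -> : n.-1.+1 = n by lia.
  rewrite btn.
  have -> : b n = b i.+1 by congr (bpt a _); have := ltn_ord i; lia.
  exact: gi.
Qed.

Lemma pre_f q : (0 < q)%N -> (q < n)%N ->
  exists x s, Dset a x /\ (0 < s)%N /\ iter s f x = bt q.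
Proof.
move=> hq1 hq.
set i := (tau^-1 (Ordinal hq))%g.
have ti : tau i = Ordinal hq by rewrite /i permKV.
have fi : f (b i) = bt q by rewrite f_b ti.
case: (posnP i) => hi0.
- have hn0 : (0 < n)%N by lia.
  set i' := (tau^-1 (Ordinal hn0))%g.
  have ti' : tau i' = Ordinal hn0 by rewrite /i' permKV.
  have hi' : (0 < i')%N.
    rewrite lt0n; apply/eqP => e.
    have : i' = i by apply: val_inj; rewrite /= e hi0.
    move=> e'; move: ti; rewrite -e' ti' => /(congr1 val) /=; lia.
  exists (b i'), 2%N; split; first by exists i'; split=> //; have := ltn_ord i'; lia.
  split=> //=.
  rewrite f_b ti' /= bt0 -hi0; exact: fi.
- exists (b i), 1%N; split; last by [].
  exists i; split=> //; have := ltn_ord i; lia.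
Qed.

Lemma dir1 k x y : (0 < k)%N -> Dset a x -> Dset a y -> iter k f x = y ->
  exists k' x' y', [/\ (0 < k')%N, Dset a x', Dset a y' & iter k' g x' = y'].
Proof.
case: k => [//|m] _ Dx Dy E.
have [u [r [[j [hj ->]] [Hc E']]]] := iterG (D_H Dx) E.
case: (ltnP j n) => hjn.
- pose jo := Ordinal hjn.
  have fu : f (b j) = bt (tau jo) by exact: (f_b jo).
  case: (posnP (tau jo)) => ht.
  + have Hf : Hs (f (b j)) by exists 0%N; split=> //; rewrite fu ht bt0.
    have r0 := iter_r0 Hf Hc; subst r.
    by exfalso; apply: (D_not0 Dy); rewrite -E' /= fu ht bt0.
  + have [x' [s [Dx' [hs' Es]]]] := pre_g ht (ltn_ord (tau jo)).
    have Ey := iter_agree agree Hc; rewrite E' in Ey.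
    exists (r + s)%N, x', y; split => //; first lia.
    by rewrite iterD Es -fu.
- have ej : j = n by lia.
  subst j.
  have Hf : Hs (f (b n)) by exists n; split=> //; rewrite f_n.
  have r0 := iter_r0 Hf Hc; subst r.
  by exfalso; apply: (D_notn Dy); rewrite -E' /= f_n.
Qed.

Lemma dir2 k x y : (0 < k)%N -> Dset a x -> Dset a y -> iter k g x = y ->
  exists k' x' y', [/\ (0 < k')%N, Dset a x', Dset a y' & iter k' f x' = y'].
Proof.
case: k => [//|m] _ Dx Dy E.
have [u [r [[j [hj ->]] [Hc E']]]] := iterG (D_H Dx) E.
case: j hj Hc E' => [|j] hj Hc E'.
- have Hf : Hs (g (b 0)) by exists 0%N; split=> //; rewrite g_0.
  have r0 := iter_r0 Hf Hc; subst r.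
  by exfalso; apply: (D_not0 Dy); rewrite -E' /= g_0.
- have hjn : (j < n)%N by lia.
  pose jo := Ordinal hjn.
  have gu : g (b j.+1) = bt (tau jo).+1 by exact: (g_b jo).
  case: (ltnP (tau jo).+1 n) => ht.
  + have [x' [s [Dx' [hs' Es]]]] := pre_f (ltn0Sn _) ht.
    have agree' : forall z, ~ Hs z -> g z = f z by move=> z hz; rewrite agree.
    have Ey := iter_agree agree' Hc; rewrite E' in Ey.
    exists (r + s)%N, x', y; split => //; first lia.
    by rewrite iterD Es -gu.
  + have e : (tau jo).+1 = n by have := ltn_ord (tau jo); lia.
    have Hf : Hs (g (b j.+1)) by exists n; split=> //; rewrite gu e btn.
    have r0 := iter_r0 Hf Hc; subst r.
    by exfalso; apply: (D_notn Dy); rewrite -E' /= gu e btn.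
Qed.

End Main.

Theorem lemma3p3 (R : realType) (n : nat) (a : 'I_n -> R) (tau : 'S_n) :
  (2 <= n)%N ->
  (forall i, 0 < a i) ->
  \sum_(i < n) a i = 1 ->
  (forall k : nat, (0 < k)%N -> forall x y,
      Dset a x -> Dset a y -> iter k (iet a tau) x <> y)
  <->
  (forall k : nat, (0 < k)%N -> forall x y,
      Dset a x -> Dset a y -> iter k (iet_dual a tau) x <> y).
Proof.
move=> _ ha hs; split.
- move=> P1 k hk x y Dx Dy E.
  have [k' [x' [y' [h1 h2 h3 h4]]]] := dir2 ha hk Dx Dy E.
  exact: (P1 k' h1 x' y' h2 h3 h4).
- move=> P2 k hk x y Dx Dy E.
  have [k' [x' [y' [h1 h2 h3 h4]]]] := dir1 ha hk Dx Dy E.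
  exact: (P2 k' h1 x' y' h2 h3 h4).
Qed.
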